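(* Let $X$ and $Y$ be linear spaces and let $f:X\to Y$ be a mapping. Then $f$ is additive, i.e. $f(x+y)=f(x)+f(y)$ for all $x,y\in X$, if and only if $$3f(x+3y)-f(3x+y)=12[f(x+y)+f(x-y)]-24f(x)+8f(y)$$ for all $x,y\in X$. *)

(* Defs.v *)
From mathcomp Require Import all_boot all_order all_algebra.
Set Implicit Arguments. Unset Strict Implicit. Unset Printing Implicit Defensive.
Import Order.TTheory GRing.Theory Num.Theory.

(* Main.v *)
Require Import Defs.
From mathcomp Require Import all_boot all_order all_algebra.
Import Order.TTheory GRing.Theory Num.Theory.
Local Open Scope ring_scope.

Inductive lex := LV of nat | LZ | LA of lex & lex | LN of lex | LMn of lex & nat | LMz of lex & int.

Section Lin.
Variable V : zmodType.
Fixpoint lev (s : seq V) e : V := match e with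
 | LV i => nth 0 s i | LZ => 0 | LA a b => lev s a + lev s b | LN a => - lev s a
 | LMn a n => lev s a *+ n | LMz a z => lev s a *~ z end.
Fixpoint laddc (c d : seq int) : seq int := match c, d with
 | [::], _ => d | _, [::] => c | x :: c', y :: d' => (x + y) :: laddc c' d' end.
Fixpoint lcoef e : seq int := match e with
 | LV i => rcons (nseq i 0) 1 | LZ => [::] | LA a b => laddc (lcoef a) (lcoef b)
 | LN a => map -%R (lcoef a) | LMn a n => map (fun x => x * n%:Z) (lcoef a)
 | LMz a z => map (fun x => x * z) (lcoef a) end.
Fixpoint llin (s : seq V) c : V := match c with
 | [::] => 0 | x :: c' => head 0 s *~ x + llin (behead s) c' end.
Lemma llin_add s c d : llin s (laddc c d) = llin s c + llin s d.
Proof.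
elim: c s d => [|x c IH] s [|y d] /=; rewrite ?add0r ?addr0 //.
by rewrite IH mulrzDr addrACA.
Qed.
Lemma llin_opp s c : llin s (map -%R c) = - llin s c.
Proof. by elim: c s => [|x c IH] s /=; rewrite ?oppr0 // IH opprD mulrNz. Qed.
Lemma llin_mul s c z : llin s (map (fun x => x * z) c) = llin s c *~ z.
Proof. by elim: c s => [|x c IH] s /=; rewrite ?mul0rz // IH mulrzA mulrzDl. Qed.
Lemma llin_var s i : llin s (rcons (nseq i 0) 1) = nth 0 s i.
Proof.
elim: i s => [|i IH] s /=; first by rewrite mulr1z addr0 nth0.
by rewrite IH mulr0z add0r nth_behead.
Qed.
Lemma lev_lin s e : lev s e = llin s (lcoef e).
Proof.
elim: e => [i||a IHa b IHb|a IH|a IH n|a IH z] /=.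
- by rewrite llin_var.
- by [].
- by rewrite llin_add IHa IHb.
- by rewrite llin_opp IH.
- by rewrite llin_mul IH.
- by rewrite llin_mul IH.
Qed.
Lemma llin0 s c : all (fun x => x == 0) c -> llin s c = 0.
Proof.
elim: c s => [|x c IH] s //= /andP [/eqP -> H].
by rewrite mulr0z add0r IH.
Qed.
Lemma lev_eq s e1 e2 :
  all (fun x => x == 0) (laddc (lcoef e1) (map -%R (lcoef e2))) -> lev s e1 = lev s e2.
Proof.
move/(llin0 s); rewrite llin_add llin_opp -!lev_lin => /eqP.
by rewrite subr_eq0 => /eqP.
Qed.

Lemma combo1 (L R L1 R1 : V) k1 : L1 = R1 -> L - R = (L1 - R1) *~ k1 -> L = R.
Proof. by move=> ->; rewrite subrr mul0rz => /eqP; rewrite subr_eq0 => /eqP. Qed.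
Lemma combo2 (L R L1 R1 L2 R2 : V) k1 k2 : L1 = R1 -> L2 = R2 ->
  L - R = (L1 - R1) *~ k1 + (L2 - R2) *~ k2 -> L = R.
Proof.
by move=> -> ->; rewrite !subrr !mul0rz addr0 => /eqP; rewrite subr_eq0 => /eqP.
Qed.
Lemma combo3 (L R L1 R1 L2 R2 L3 R3 : V) k1 k2 k3 : L1 = R1 -> L2 = R2 -> L3 = R3 ->
  L - R = (L1 - R1) *~ k1 + (L2 - R2) *~ k2 + (L3 - R3) *~ k3 -> L = R.
Proof.
by move=> -> -> ->; rewrite !subrr !mul0rz !addr0 => /eqP; rewrite subr_eq0 => /eqP.
Qed.
End Lin.
Arguments lev {V}.
Arguments combo1 {V L R L1 R1} k1.
Arguments combo2 {V L R L1 R1 L2 R2} k1 k2.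
Arguments combo3 {V L R L1 R1 L2 R2 L3 R3} k1 k2 k3.

Ltac lidx t l := lazymatch l with
 | ?u :: ?l' => let b := constr:(ltac:(tryif unify u t then exact true else exact false)) in
   lazymatch b with true => constr:(0%N) | false => let n := lidx t l' in constr:(S n) end end.
Ltac lmem t l := lazymatch l with
 | ?u :: ?l' => let b := constr:(ltac:(tryif unify u t then exact true else exact false)) in
   lazymatch b with true => constr:(true) | false => lmem t l' end
 | _ => constr:(false) end.
Ltac latoms t l := lazymatch t with
 | @GRing.add _ ?a ?b => let l1 := latoms a l in latoms b l1
 | @GRing.opp _ ?a => latoms a l
 | @GRing.natmul _ ?a _ => latoms a l
 | @intmul _ ?a _ => latoms a l
 | @GRing.zero _ => l
 | _ => let b := lmem t l in lazymatch b with true => l | false => constr:(t :: l) end end.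
Ltac lreify t l := lazymatch t with
 | @GRing.add _ ?a ?b => let x := lreify a l in let y := lreify b l in constr:(LA x y)
 | @GRing.opp _ ?a => let x := lreify a l in constr:(LN x)
 | @GRing.natmul _ ?a ?n => let x := lreify a l in constr:(LMn x n)
 | @intmul _ ?a ?z => let x := lreify a l in constr:(LMz x z)
 | @GRing.zero _ => constr:(LZ)
 | _ => let i := lidx t l in constr:(LV i) end.
Ltac lin := lazymatch goal with |- @eq ?T ?L ?R =>
  let l0 := constr:(@nil T) in
  let l1 := latoms L l0 in let l := latoms R l1 in
  let e1 := lreify L l in let e2 := lreify R l in
  change (lev l e1 = lev l e2); apply: lev_eq; vm_compute; reflexivity end.

Lemma torsion (K : numFieldType) (Y : lmodType K) (v : Y) n :
  (0 < n)%N -> v *+ n = 0 -> v = 0.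
Proof.
move=> n0 H.
have nz : (n%:R : K) != 0 by rewrite pnatr_eq0 -lt0n.
by rewrite -[v]scale1r -(mulVf nz) -scalerA scaler_nat H scaler0.
Qed.

Lemma torsion_eq (K : numFieldType) (Y : lmodType K) (v w : Y) n :
  (0 < n)%N -> (v - w) *+ n = 0 -> v = w.
Proof. by move=> n0 /(torsion _ _ _ _ n0) /eqP; rewrite subr_eq0 => /eqP. Qed.

Theorem lemma2p1 (K : numFieldType) (X Y : lmodType K) (f : X -> Y) :
  (forall x y : X, f (x + y) = f x + f y) <->
  (forall x y : X,
     f (x + y *+ 3) *+ 3 - f (x *+ 3 + y)
     = (f (x + y) + f (x - y)) *+ 12 - f x *+ 24 + f y *+ 8).
Proof.
split=> H.
- have f0 : f 0 = 0.
    by have h := H 0 0; rewrite addr0 in h; apply: (combo1 (-1) h); lin.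
  have fN : forall x, f (- x) = - f x.
    by move=> x; apply/eqP; rewrite -addr_eq0 -H addNr f0.
  have fM : forall x n, f (x *+ n) = f x *+ n.
    by move=> x; elim=> [|n IH]; rewrite ?mulr0n ?f0 // !mulrS H IH.
  move=> x y; rewrite !H ?fN ?fM ?fN; lin.
- have f0 : f 0 = 0.
    have h := H 0 0; rewrite ?(mul0rn, addr0, subr0) in h.
    apply: (@torsion _ _ _ 6) => //.
    by apply: (combo1 (-1) h); lin.
  have f3 : forall x, f (x *+ 3) = f x *+ 3.
    move=> x; have h := H x 0; rewrite ?(mul0rn, addr0, subr0, f0) in h.
    by apply: (combo1 (-1) h); lin.
  have fN : forall x, f (- x) = - f x.
    move=> x; have h := H 0 x; rewrite ?(mul0rn, add0r, sub0r, f0, f3) in h.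
    apply: (@torsion_eq _ _ _ _ 12) => //.
    by apply: (combo1 (-1) h); lin.
  have f2 : forall x, f (x *+ 2) = f x *+ 2.
    move=> x; have h := H x (- x).
    rewrite (_ : x + (- x) *+ 3 = - (x *+ 2)) in h; last by lin.
    rewrite (_ : x *+ 3 + - x = x *+ 2) in h; last by lin.
    rewrite (_ : x + - x = 0) in h; last by lin.
    rewrite (_ : x - - x = x *+ 2) in h; last by lin.
    rewrite !fN f0 in h.
    apply: (@torsion_eq _ _ _ _ 16) => //.
    by apply: (combo1 (-1) h); lin.
  have star : forall x y, f (x + y *+ 3) = f (x + y) *+ 6 + f (x - y) *+ 3 - f x *+ 8.
    move=> x y; have h1 := H x y; have h2 := H y x.
    rewrite (_ : y + x *+ 3 = x *+ 3 + y) in h2; last by lin.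
    rewrite (_ : y *+ 3 + x = x + y *+ 3) in h2; last by lin.
    rewrite (_ : y + x = x + y) in h2; last by lin.
    rewrite (_ : y - x = - (x - y)) in h2; last by lin.
    rewrite fN in h2.
    apply: (@torsion_eq _ _ _ _ 8) => //.
    by apply: (combo2 3 1 h1 h2); lin.
  have dbl : forall x y, f (x + y *+ 2) = f (x + y) *+ 3 + f (x - y) - f x *+ 3.
    move=> x y; have h1 := star (x - y) y; have h2 := star (x + y) (- y).
    rewrite (_ : x - y + y *+ 3 = x + y *+ 2) in h1; last by lin.
    rewrite (_ : x - y + y = x) in h1; last by lin.
    rewrite (_ : x - y - y = x - y *+ 2) in h1; last by lin.
    rewrite (_ : x + y + (- y) *+ 3 = x - y *+ 2) in h2; last by lin.
    rewrite (_ : x + y + - y = x) in h2; last by lin.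
    rewrite (_ : x + y - - y = x + y *+ 2) in h2; last by lin.
    apply: (@torsion_eq _ _ _ _ 8) => //.
    by apply: (combo2 (-1) (-3) h1 h2); lin.
  move=> x y.
  have h1 := dbl y x; have h2 := dbl (- y) x; have h3 := dbl (x *+ 2) y.
  rewrite (_ : y + x *+ 2 = x *+ 2 + y) in h1; last by lin.
  rewrite (_ : y + x = x + y) in h1; last by lin.
  rewrite (_ : y - x = - (x - y)) in h1; last by lin.
  rewrite (_ : - y + x *+ 2 = x *+ 2 - y) in h2; last by lin.
  rewrite (_ : - y + x = x - y) in h2; last by lin.
  rewrite (_ : - y - x = - (x + y)) in h2; last by lin.
  rewrite (_ : x *+ 2 + y *+ 2 = (x + y) *+ 2) in h3; last by lin.
  rewrite !fN in h1 h2; rewrite !f2 in h3.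
  apply: (@torsion_eq _ _ _ _ 6) => //.
  by apply: (combo3 (-1) (-3) (-1) h3 h1 h2); lin.
Qed.
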